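(* Let $\Bbbk$ be a field, $\mathcal A$ a $\Bbbk$-algebra, and $f(t)=1+\sum_{k\ge 1}a_kt^k\in\Bbbk[[t]]$ with $a_k\ne 0$ for all $k\ge 1$. For $k\ge 1$ let $P_{f,k}(t)$ be the polynomial $$P_{f,k}(t)=(-1)^k\det\begin{pmatrix} 1&a_1t&a_2t^2&\ldots &a_kt^k\\ 1&a_1&a_2&\ldots &a_k\\ 0&1&a_1&\ldots &a_{k-1}\\ \vdots&\vdots&\ddots&\ddots&\vdots\\ 0&0&\ldots &1&a_1 \end{pmatrix},$$ and let ${\bf q}_k=\{q_{1k},\dots,q_{kk}\}$ be its roots (with multiplicity, in an algebraic closure of $\Bbbk$). Then for all $x,y\in\mathcal A$, $$f(x)\,y\,f(x)^{-1}=y+\sum_{k\ge 1}a_k\,(\mathrm{ad}\,x)^{{\bf q}_k}(y).$$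
   Context: For $q\in\Bbbk$ put $[a,b]_q=ab-qba$. For ${\bf q}=\{q_1,\dots,q_k\}$, $(\mathrm{ad}\,x)^{\bf q}(y)=[x,[x,\ldots,[x,y]_{q_1},\ldots]_{q_{k-1}}]_{q_k}$, which equals $\sum_{j=0}^k(-1)^je_j(q_1,\dots,q_k)\,x^{k-j}yx^j$ ($e_j$ the $j$-th elementary symmetric function); since the elementary symmetric functions of the roots of $P_{f,k}$ lie in $\Bbbk$, this operator is defined over $\Bbbk$. The infinite sums are understood formally: e.g. replace $x$ by $\tau x$ for a formal variable $\tau$, so that both sides are identities in $\mathcal A[[\tau]]$ (the $k$-th term acquiring the factor $\tau^k$). *)

(* Defs.v *)
From HB Require Import structures.
From mathcomp Require Import all_boot all_order all_algebra.
Set Implicit Arguments. Unset Strict Implicit. Unset Printing Implicit Defensive.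
Import GRing.Theory.
Local Open Scope ring_scope.

(* The (n+1)x(n+1) matrix defining P_{f,n}; the coefficient sequence of f is
   a : nat -> k with a 0 = 1.  Row 0 is (1, a1 t, ..., an t^n); row i >= 1 is
   (0,...,0, a_0 = 1, a_1, ..., a_{n-i+1}) starting at column i-1. *)
Definition Pmat (k : fieldType) (a : nat -> k) (n : nat) : 'M[{poly k}]_(n.+1) :=
  \matrix_(i < n.+1, j < n.+1)
    if (i == 0 :> nat) then (a j)%:P * 'X^j
    else if (i.-1 <= j)%N then (a (j - i.-1)%N)%:P else 0.

Definition Pfk (k : fieldType) (a : nat -> k) (n : nat) : {poly k} :=
  (-1) ^+ n * \det (Pmat a n).

Definition elsym (L : comNzRingType) (n : nat) (s : 'I_n -> L) (j : nat) : L :=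
  \sum_(I : {set 'I_n} | #|I| == j) \prod_(i in I) s i.

(* (ad x)^{q}(y) = sum_j (-1)^j e_j x^{n-j} y x^j, with c j = e_j (in k) *)
Definition adq (k : fieldType) (A : algType k) (c : nat -> k) (n : nat) (x y : A) : A :=
  \sum_(j < n.+1) (((-1) ^+ j * c j) *: (x ^+ (n - j) * y * x ^+ j)).

(* Formal power series in tau over a ring A, as coefficient sequences. *)
Definition sermul (A : pzRingType) (F G : nat -> A) : nat -> A :=
  fun n => \sum_(i < n.+1) F i * G (n - i)%N.
Definition serC (A : pzRingType) (y : A) : nat -> A :=
  fun n => if n == 0%N then y else 0.
(* f(tau x) = sum_n a_n x^n tau^n *)
Definition subst_ser (k : fieldType) (A : algType k) (a : nat -> k) (x : A) : nat -> A :=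
  fun n => a n *: x ^+ n.

(* Main.v *)
Require Import Defs.
From HB Require Import structures.
From mathcomp Require Import all_boot all_order all_algebra zify.
Import GRing.Theory.
Local Open Scope ring_scope.

Lemma coef_prod_XsubC_ord (R : comNzRingType) n (s : 'I_n -> R) m :
  (m <= n)%N ->
  (\prod_(i < n) ('X - (s i)%:P))`_m =
  (-1) ^+ (n - m) * elsym s (n - m).
Proof.
move=> nle.
under eq_bigr => i _ do rewrite addrC -raddfN/=.
rewrite bigA_distr /= coef_sum /elsym.
transitivity (\sum_(I in {set 'I_n}) if #|I| == (n - m)%N then
                  \prod_(i < n | i \in I) - s i else 0).
  apply eq_bigr => I _.
  rewrite big_if/= big_const iter_mulr_1 -rmorph_prod/= coefCM coefXn.
  rewrite -[#|I| == _](eqn_add2r m) subnK//.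
  rewrite -[X in (_ + _)%N == X]card_ord -(cardC I) eqn_add2l.
  by case: ifP; rewrite ?mulr1 ?mulr0.
by rewrite -big_mkcond mulr_sumr/=; apply: eq_bigr => I /eqP <-; rewrite prodrN.
Qed.

Section G.
Variables (k : fieldType) (a : nat -> k).

Fixpoint gaux (f n : nat) : k :=
  match f with
  | 0%N => 1
  | f'.+1 => if n == 0%N then 1 else - \sum_(i < n) a (n - i) * gaux f' i
  end.

Lemma gaux_stable f1 f2 n : (n <= f1)%N -> (n <= f2)%N -> gaux f1 n = gaux f2 n.
Proof.
elim: f1 f2 n => [|f1 IH] [|f2] n /=.
- by [].
- by rewrite leqn0 => /eqP ->.
- by rewrite leqn0 => _ /eqP ->.
- move=> h1 h2; case: ifP => // _; congr (- _); apply: eq_bigr => i _; congr (_ * _).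
  apply: IH; rewrite -ltnS; apply: leq_trans (ltn_ord i) _; by [].
Qed.

Definition g n := gaux n n.

Lemma g0 : g 0 = 1. Proof. by []. Qed.

Lemma gS n : (0 < n)%N -> g n = - \sum_(i < n) a (n - i) * g i.
Proof.
case: n => // n _; rewrite /g /=; congr (- _); apply: eq_bigr => i _.
congr (_ * _); apply: gaux_stable => //; rewrite -ltnS //.
Qed.

Lemma g_rec n (a0 : a 0%N = 1) : (0 < n)%N -> \sum_(i < n.+1) a (n - i) * g i = 0.
Proof.
move=> hn; rewrite big_ord_recr /= subnn a0 mul1r gS //; apply: subrr.
Qed.
End G.
Arguments g {k} a n.

Lemma G_eq (k : fieldType) (A : algType k) (a : nat -> k) (a0 : a 0%N = 1)
  (x : A) (G : nat -> A)
  (hG1 : sermul (subst_ser a x) G = serC 1) n : G n = g a n *: x ^+ n.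
Proof.
elim/ltn_ind: n => n IH.
have := congr1 (fun F => F n) hG1; rewrite /sermul /serC /subst_ser /=.
rewrite big_ord_recl /= a0 scale1r expr0 mul1r subn0.
have E : \sum_(i < n) a (bump 0 i) *: x ^+ bump 0 i * G (n - bump 0 i)%N
   = \sum_(i < n) (a i.+1 * g a (n - i.+1)) *: x ^+ n.
  apply: eq_bigr => i _; rewrite /bump /= add1n IH; last by have := ltn_ord i; lia.
  rewrite -scalerAl -scalerAr scalerA -exprD subnKC //.
rewrite E; case: n IH E => [|n] IH E.
  by rewrite big_ord0 addr0 => ->; rewrite /g /= scale1r expr0.
move=> /eqP; rewrite addr_eq0 => /eqP ->.
rewrite gS //= -scaler_suml -scaleNr; congr (_ *: _); congr (- _).
rewrite (reindex_inj rev_ord_inj) /=; apply: eq_bigr => i _.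
have hi := ltn_ord i.
have -> : (n.+1 - i.+1).+1 = (n.+1 - i)%N by lia.
have -> : (n.+1 - (n.+1 - i))%N = i by lia.
by [].
Qed.

Lemma minor_det (k : fieldType) (a : nat -> k) (a0 : a 0%N = 1) n :
  \det (row' (0 : 'I_n.+1) (col' ord_max (Pmat a n))) = 1.
Proof.
rewrite -det_tr det_trig.
  apply: big1 => i _; rewrite !mxE lift0 lift_max /= leqnn subnn a0 //.
apply/is_trig_mxP => i j hij; rewrite !mxE lift0 lift_max /=.

by rewrite leqNgt hij.
Qed.

Lemma Pfk_eq (k : fieldType) (a : nat -> k) (a0 : a 0%N = 1) n :
  Pfk a n = \sum_(m < n.+1) (a m * g a (n - m)) *: 'X^m.
Proof.
set M := Pmat a n.
set w : 'cV[{poly k}]_(n.+1) := \col_j (g a (n - j))%:P.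
set P := \sum_(m < n.+1) (a m * g a (n - m)) *: 'X^m.
have Mw : M *m w = \col_i (if i == 0 :> nat then P else 0).
  apply/matrixP => i j; rewrite !mxE; case: ifP => hi.
    rewrite /P; apply: eq_bigr => m _; rewrite !mxE hi.
    by rewrite -mul_polyC polyCM -!mulrA [_ * 'X^m]mulrC.
  have hin : (0 < i)%N by rewrite lt0n hi.
  have hile : (i.-1 < n)%N by have := ltn_ord i; lia.
  set p := i.-1 in hile *.
  transitivity ((\sum_(j0 < n.+1) (if (p <= j0)%N then a (j0 - p)%N * g a (n - j0) else 0))%:P).
    rewrite rmorph_sum; apply: eq_bigr => j0 _; rewrite !mxE hi -/p.
    by case: ifP; rewrite ?mul0r ?polyCM // => _; rewrite rmorphM.
  apply/eqP; rewrite polyC_eq0; apply/eqP.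
  rewrite -(big_mkord xpredT (fun j0 : nat => if (p <= j0)%N then a (j0 - p)%N * g a (n - j0) else 0)).
  rewrite (big_cat_nat (leq0n p)) /=; last by lia.
  rewrite big_nat_cond big1 ?add0r; last first.
    by move=> l /andP[/andP[_ hl] _]; rewrite leqNgt hl.
  rewrite -{1}[p]add0n big_addn.
  have -> : (n.+1 - p = (n - p).+1)%N by lia.
  rewrite big_mkord (reindex_inj rev_ord_inj) /=.
  rewrite -[RHS](@g_rec k a (n - p) a0 _); last by lia.
  apply: eq_bigr => l _; have hl := ltn_ord l.
  rewrite leq_addl.
  have -> : ((n - p).+1 - l.+1 + p - p = n - p - l)%N by lia.
  by have -> : (n - ((n - p).+1 - l.+1 + p) = l)%N by lia.
have := congr1 (fun B => (\adj M *m B) ord_max 0) Mw.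
rewrite mulmxA mul_adj_mx mul_scalar_mx !mxE.
rewrite (bigD1 0) //= big1; last first.
  move=> i hi; rewrite [X in _ * X]mxE ifF ?mulr0 //; apply: contraNF hi => /eqP h.
  by apply/eqP/val_inj.
rewrite !mxE eqxx addr0 subnn /g /= mulr1 /cofactor minor_det // mulr1 add0n => hdet.
by rewrite /Pfk -/M hdet /= mulrA -exprD -signr_odd oddD addbb mul1r.
Qed.

Lemma keyK (k : fieldType) (a : nat -> k)
  (a0 : a 0%N = 1) (anz : forall n, (0 < n)%N -> a n != 0)
  (L : closedFieldType) (iota : {rmorphism k -> L})
  (q : forall n : nat, 'I_n -> L)
  (hq : forall n, (0 < n)%N ->
     map_poly iota (Pfk a n) =
       lead_coef (map_poly iota (Pfk a n)) *: \prod_(i < n) ('X - (q n i)%:P))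
  (c : nat -> nat -> k)
  (hc : forall n j, (0 < n)%N -> (j <= n)%N -> iota (c n j) = elsym (q n) j)
  n j : (0 < n)%N -> (j <= n)%N ->
  a n * ((-1) ^+ j * c n j) = a (n - j)%N * g a j.
Proof.
move=> hn hj.
have hQ := hq n hn.
set lc := lead_coef _ in hQ.
have coefQ m : (m <= n)%N -> (map_poly iota (Pfk a n))`_m = iota (a m * g a (n - m)).
  move=> hm; rewrite Pfk_eq // -(poly_def n.+1 (fun m => a m * g a (n - m))) coef_map /= coef_poly ltnS hm //.
have coefP m : (m <= n)%N -> (map_poly iota (Pfk a n))`_m = lc * ((-1) ^+ (n - m) * elsym (q n) (n - m)).
  by move=> hm; rewrite hQ coefZ coef_prod_XsubC_ord.
have hlc : lc = iota (a n).
  have := coefP n (leqnn n); rewrite coefQ // subnn /g /= mulr1 expr0 mul1r.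
  by rewrite /elsym (big_pred1 set0) ?big_set0 ?mulr1 // => I; rewrite cards_eq0.
apply: (fmorph_inj iota).
have := coefP (n - j)%N (leq_subr _ _); rewrite coefQ ?leq_subr // subKn // hlc => ->.
by rewrite -hc // !rmorphM rmorph_sign.
Qed.

Theorem theorem1p2 (k : fieldType) (A : algType k) (a : nat -> k)
  (a0 : a 0%N = 1) (anz : forall n, (0 < n)%N -> a n != 0)
  (L : closedFieldType) (iota : {rmorphism k -> L})
  (q : forall n : nat, 'I_n -> L)
  (hq : forall n, (0 < n)%N ->
     map_poly iota (Pfk a n) =
       lead_coef (map_poly iota (Pfk a n)) *: \prod_(i < n) ('X - (q n i)%:P))
  (c : nat -> nat -> k)
  (hc : forall n j, (0 < n)%N -> (j <= n)%N -> iota (c n j) = elsym (q n) j)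
  (x y : A) (G : nat -> A)
  (hG1 : sermul (subst_ser a x) G = serC 1)
  (hG2 : sermul G (subst_ser a x) = serC 1) :
  forall n : nat,
    sermul (sermul (subst_ser a x) (serC y)) G n =
    (if n == 0%N then y else a n *: adq (c n) n x y).
Proof.
move=> n.
have inner m : sermul (subst_ser a x) (serC y) m = a m *: x ^+ m * y.
  rewrite /sermul big_ord_recr /= subnn /serC /= big1 ?add0r //.
  move=> i _; rewrite ifF ?mulr0 //; apply/negbTE; rewrite subn_eq0 -ltnNge; exact: ltn_ord.
have -> : sermul (sermul (subst_ser a x) (serC y)) G n =
  \sum_(i < n.+1) (a i *: x ^+ i * y) * (g a (n - i) *: x ^+ (n - i)).
  by apply: eq_bigr => i _; rewrite inner (@G_eq _ _ a a0 x G hG1).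
case: n => [|n].
  by rewrite big_ord1 /= a0 !scale1r !expr0 mul1r mulr1 /g.
rewrite /= /adq scaler_sumr (reindex_inj rev_ord_inj) /=; apply: eq_bigr => i _.
have hi := ltn_ord i.
rewrite scalerA (@keyK _ a a0 anz _ _ _ hq _ hc) //.
have -> : (n.+2 - i.+1 = n.+1 - i)%N by lia.
have -> : (n.+1 - (n.+1 - i) = i)%N by lia.
by rewrite -!scalerAl -scalerAr scalerA.
Qed.
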